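(* Let $n\ge1$ and let $\omega\in\mathbb{R}^n$ be non-resonant (i.e. $\langle k,\omega\rangle\notin\mathbb{Z}$ for all $k\in\mathbb{Z}^n\setminus\{0\}$). Suppose there exist $\tau\in\left[0,\frac{1}{n-1}\right)$ (with $\left[0,\frac{1}{n-1}\right)=[0,\infty)$ if $n=1$) and $C>0$ such that $T_{i+1}(\omega)\le C\,T_i(\omega)^{1+\tau}$ for all $i\ge0$. Then there is a constant $D>0$ such that for every $k\in\mathbb{Z}^n\setminus\{0\}$, $$\|\langle k,\omega\rangle\|_{\mathbb{Z}}\ge D\,|k|^{-(1+\mu)n},\qquad\text{where }\ \mu=\frac{n\tau}{n-(n-1)(1+\tau)}.$$
   Context: For $k\in\mathbb{Z}^n$, $|k|=\max_i|k_i|$; for $x\in\mathbb{R}$, $\|x\|_{\mathbb{Z}}=\min_{m\in\mathbb{Z}}|x-m|$; for $v\in\mathbb{R}^n$, $\|v\|_{\mathbb{Z}}=\min_{m\in\mathbb{Z}^n}|v-m|$. The periods of $\omega$ are $T_0(\omega)=1$ and $T_{i+1}(\omega)=\min\{T\in\mathbb{N},\,T\ge1:\|T\omega\|_{\mathbb{Z}}<\|T_i(\omega)\omega\|_{\mathbb{Z}}\}$ (all defined since $\omega$ is non-resonant). *)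

(* Defs.v *)
From HB Require Import structures.
From mathcomp Require Import all_boot all_order all_algebra.
From mathcomp Require Import all_classical all_reals all_analysis.
Set Implicit Arguments. Unset Strict Implicit. Unset Printing Implicit Defensive.
Import Order.TTheory GRing.Theory Num.Theory.
Local Open Scope classical_set_scope.
Local Open Scope ring_scope.

Section Defs.
Variable R : realType.

Definition distZ (x : R) : R := inf [set `|x - m%:~R| | m in [set: int]].

Definition supnormR n (v : 'I_n -> R) : R := \big[Num.max/0]_(i < n) `|v i|.

Definition distZv n (v : 'I_n -> R) : R :=
  inf [set supnormR (fun i => v i - (m i)%:~R) | m in [set: 'I_n -> int]].

Definition supnormZ n (k : 'I_n -> int) : nat := \big[maxn/0%N]_(i < n) `|k i|%N.

Definition dotZR n (k : 'I_n -> int) (w : 'I_n -> R) : R :=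
  \sum_(i < n) (k i)%:~R * w i.

Definition nonzeroZ n (k : 'I_n -> int) : Prop := exists i, k i != 0.

Definition non_resonant n (w : 'I_n -> R) : Prop :=
  forall k : 'I_n -> int, nonzeroZ k -> ~ (exists m : int, dotZR k w = m%:~R).

Definition scaleT n (T : nat) (w : 'I_n -> R) : 'I_n -> R := fun i => T%:R * w i.

(* T_{i+1} = min { T >= 1 : ||T w||_Z < ||T_i w||_Z } (0 if no such T,
   which never happens for non-resonant w). *)
Definition next_period n (w : 'I_n -> R) (t : nat) : nat :=
  match pselect (exists T : nat,
     (0 < T)%N && `[< distZv (scaleT T w) < distZv (scaleT t w) >]) with
  | left h => ex_minn h
  | right _ => 0%N
  end.

Fixpoint period n (w : 'I_n -> R) (i : nat) : nat :=
  match i with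
  | 0 => 1%N
  | i'.+1 => next_period w (period w i')
  end.

End Defs.

(* Main.v *)
Require Import Defs.
From HB Require Import structures.
From mathcomp Require Import all_boot all_order all_algebra.
From mathcomp Require Import all_classical all_reals all_analysis.
From mathcomp Require Import ring lra.
Import Order.TTheory GRing.Theory Num.Theory.
Set Implicit Arguments. Unset Strict Implicit. Unset Printing Implicit Defensive.
Local Open Scope classical_set_scope.
Local Open Scope ring_scope.


Lemma supR_ge (R : realType) n (v : 'I_n -> R) i : `|v i| <= supnormR v.
Proof. rewrite /supnormR; exact: (le_bigmax _ (fun i => `|v i|) i). Qed.

Lemma supR_ge0 (R : realType) n (v : 'I_n -> R) : 0 <= supnormR v.
Proof. rewrite /supnormR; elim/big_ind: _ => //= x y hx hy; by rewrite le_max hx. Qed.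

Lemma supR_lt (R : realType) n (v : 'I_n -> R) b :
  0 < b -> (forall i, `|v i| < b) -> supnormR v < b.
Proof. move=> hb h; rewrite /supnormR; exact: bigmax_lt. Qed.

Lemma supZ_ge n (k : 'I_n -> int) i : (`|k i| <= supnormZ k)%N.
Proof. rewrite /supnormZ; exact: (leq_bigmax (F := fun i => `|k i|%N) i). Qed.

Definition Sv (R : realType) n (v : 'I_n -> R) :=
  [set supnormR (fun i => v i - (m i)%:~R) | m in [set: 'I_n -> int]].

Lemma Sv_lb (R : realType) n (v : 'I_n -> R) : has_lbound (Sv v).
Proof. exists 0 => x [m _ <-]; exact: supR_ge0. Qed.

Lemma Sv_n0 (R : realType) n (v : 'I_n -> R) : (Sv v !=set0)%classic.
Proof. by exists (supnormR (fun i => v i - (0:int)%:~R)); exists (fun=> 0). Qed.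

Lemma dv_le (R : realType) n (v : 'I_n -> R) m :
  distZv v <= supnormR (fun i => v i - (m i)%:~R).
Proof. apply: (ge_inf (Sv_lb v)); by exists m. Qed.

Lemma dv_ex (R : realType) n (v : 'I_n -> R) b :
  distZv v < b -> exists m : 'I_n -> int, supnormR (fun i => v i - (m i)%:~R) < b.
Proof. move=> h; have [y [m _ <-] hy] := inf_lt (Sv_n0 v) h; by exists m. Qed.

Lemma dv_le1 (R : realType) n (v : 'I_n -> R) : distZv v <= 1.
Proof.
apply: le_trans (dv_le v (fun i => Num.floor (v i))) _.
apply/ltW/supR_lt => // i.
have /andP[h1 h2] := floor_itv (v i).
rewrite ger0_norm ?subr_ge0 //; rewrite intrD in h2; lra.
Qed.

Lemma dv_gt0 (R : realType) n (v : 'I_n -> R) i0 :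
  (forall m : int, v i0 != m%:~R) -> 0 < distZv v.
Proof.
move=> hi.
set x := v i0; set f := Num.floor x.
have /andP[h1 h2] := floor_itv x.
have hne : f%:~R != x by rewrite eq_sym hi.
have g0 : 0 < Num.min (x - f%:~R) ((f+1)%:~R - x).
  by rewrite lt_min !subr_gt0 h2 andbT lt_neqAle h1 andbT.
apply: lt_le_trans g0 _; apply: lb_le_inf; first exact: Sv_n0.
move=> y [m _ <-]; apply: le_trans (supR_ge _ i0).
rewrite -/x; case: (lerP (m i0) f) => hm.
  rewrite ge_min; apply/orP; left.
  have : ((m i0)%:~R : R) <= f%:~R by rewrite ler_int.
  move=> hh; rewrite ger0_norm; [lra| lra].
rewrite ge_min; apply/orP; right.
have : ((f+1)%:~R : R) <= (m i0)%:~R by rewrite ler_int lezD1.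
move=> hh; rewrite ler0_norm; [lra| lra].
Qed.



Definition fr (R : realType) (x : R) := x - (Num.floor x)%:~R.

Lemma fr_itv (R : realType) (x : R) : 0 <= fr x < 1.
Proof. have /andP[h1 h2] := floor_itv x; rewrite intrD in h2; apply/andP; rewrite /fr; split; lra. Qed.

Lemma box_close (R : realType) (Q : nat) (x y : R) : (0 < Q)%N ->
  Num.trunc (Q%:R * fr x) = Num.trunc (Q%:R * fr y) -> `|fr y - fr x| < Q%:R^-1.
Proof.
move=> hQ he.
have hQ' : (0 : R) < Q%:R by rewrite ltr0n.
have /andP[x1 x2] := fr_itv x; have /andP[y1 y2] := fr_itv y.
have /andP[a1 a2] := truncn_itv (mulr_ge0 (ltW hQ') x1).
have /andP[b1 b2] := truncn_itv (mulr_ge0 (ltW hQ') y1).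
rewrite he in a1 a2.
set a := Num.trunc _ in a1 a2 b1 b2.

have ea : (a.+1%:R : R) = a%:R + 1 by rewrite -natr1.
rewrite ea in a2 b2.
have hQi : (0:R) < Q%:R^-1 by rewrite invr_gt0.
have hQQ : (Q%:R : R) * Q%:R^-1 = 1 by rewrite mulrV ?unitfE ?gt_eqF.
rewrite ltr_norml; apply/andP; split; nra.
Qed.

Lemma box_lt (R : realType) (Q' : nat) (x : R) : (Num.trunc (Q'.+1%:R * fr x) < Q'.+1)%N.
Proof.
rewrite ltnS truncn_le_nat; have /andP[h1 h2] := fr_itv x.
have hQ : (0:R) < Q'.+1%:R by rewrite ltr0n.
rewrite -[X in _ < X]mulr1 ltr_pM2l //.
Qed.

Lemma dirichlet (R : realType) n (w : 'I_n -> R) (Q : nat) : (0 < Q)%N ->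
  exists T : nat, [/\ (0 < T)%N, (T <= Q ^ n)%N & distZv (scaleT T w) < Q%:R^-1].
Proof.
case: Q => // Q' _.
pose box (t : 'I_(Q'.+1 ^ n).+1) : {ffun 'I_n -> 'I_Q'.+1} :=
  [ffun i => inord (Num.trunc (Q'.+1%:R * fr (t%:R * w i)))].
have : ~~ injectiveb box.
  apply/negP => /injectiveP /leq_card; by rewrite card_ffun !card_ord ltnn.
case/injectivePn => t1 [t2 hne heq].
wlog: t1 t2 hne heq / (t1 < t2)%N.
  move=> H; case: (ltngtP t1 t2) => h; first exact: H h.
    by apply: (H t2 t1) => //; rewrite eq_sym.
  by exfalso; move/eqP: hne; apply; apply: val_inj.
move=> hlt.
exists (t2 - t1)%N; split.
- by rewrite subn_gt0.
- have := ltn_ord t2; rewrite ltnS => h2; exact: leq_trans (leq_subr _ _) h2.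
- apply: le_lt_trans (dv_le _ (fun i => Num.floor (t2%:R * w i) - Num.floor (t1%:R * w i))) _.
  apply: supR_lt; first by rewrite invr_gt0 ltr0n.
  move=> i; have hi : box t1 i = box t2 i by rewrite heq.
  rewrite /box !ffunE in hi.
  have := congr1 val hi; rewrite /= !inordK ?box_lt // => ht.
  have := box_close (ltn0Sn Q') ht.
  rewrite /scaleT /fr natrB ?(ltnW hlt) // intrB.
  suff -> : (t2%:R - t1%:R) * w i - ((Num.floor (t2%:R * w i))%:~R - (Num.floor (t1%:R * w i))%:~R)
     = t2%:R * w i - (Num.floor (t2%:R * w i))%:~R - (t1%:R * w i - (Num.floor (t1%:R * w i))%:~R) by [].
  ring.
Qed.



Lemma eps_pos (R : realType) n (w : 'I_n -> R) t :
  (0 < n)%N -> non_resonant w -> (0 < t)%N -> 0 < distZv (scaleT t w).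
Proof.
move=> hn hw ht; pose i0 := Ordinal hn.
apply: (dv_gt0 (i0 := i0)) => m; apply/negP => /eqP h.
apply: (hw (fun i => if i == i0 then t%:Z else 0)).
  rewrite /nonzeroZ; exists i0 => /=; by move: ht; case: (t).
exists m; rewrite /dotZR (bigD1 i0) //= big1 ?addr0; last first.
  by move=> i /negbTE ->; rewrite mul0r.
by rewrite -h /scaleT.
Qed.

Lemma trunc_inv_gt (R : realType) (e : R) : 0 < e ->
  ((Num.trunc e^-1).+1%:R)^-1 < e.
Proof.
move=> he; have h := truncnS_gt e^-1.
rewrite -[X in _ < X](invrK e) ltf_pV2 ?posrE ?invr_gt0 ?ltr0n //.
Qed.

Lemma np_spec (R : realType) n (w : 'I_n -> R) t :
  (0 < n)%N -> non_resonant w -> (0 < t)%N ->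
  [/\ (0 < next_period w t)%N,
      distZv (scaleT (next_period w t) w) < distZv (scaleT t w) &
      forall T, (0 < T)%N -> distZv (scaleT T w) < distZv (scaleT t w) ->
        (next_period w t <= T)%N].
Proof.
move=> hn hw ht.
have ex : exists T : nat, (0 < T)%N && `[< distZv (scaleT T w) < distZv (scaleT t w) >].
  have he := eps_pos hn hw ht.
  have [T [hT _ hd]] := dirichlet w (ltn0Sn (Num.trunc (distZv (scaleT t w))^-1)).
  exists T; rewrite hT /=; apply/asboolP; apply: lt_trans hd _.
  exact: trunc_inv_gt.
rewrite /next_period; case: pselect => [h|//]; case: ex_minnP => m /andP[hm /asboolP hm'] hmin.
split => // T hT hT'; apply: hmin; rewrite hT; exact/asboolP.
Qed.

Lemma period_props (R : realType) n (w : 'I_n -> R) j :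
  (0 < n)%N -> non_resonant w ->
  (0 < period w j)%N /\
  (forall T, (0 < T)%N -> (T <= period w j)%N ->
     distZv (scaleT (period w j) w) <= distZv (scaleT T w)).
Proof.
move=> hn hw; elim: j => [|j [hp hI]] /=.
  split => // T hT hT1; have -> : T = 1%N by apply/eqP; rewrite eqn_leq hT1.
  by [].
have [h1 h2 h3] := np_spec hn hw hp.
split => // T hT hT1.
case: (ltnP T (next_period w (period w j))) => hlt; last first.
  by have -> : T = next_period w (period w j) by apply/eqP; rewrite eqn_leq hT1.
apply: ltW; apply: lt_le_trans h2 _; rewrite leNgt; apply/negP => hc.
by have := h3 T hT hc; rewrite leqNgt hlt.
Qed.

Lemma period_min (R : realType) n (w : 'I_n -> R) j T :
  (0 < n)%N -> non_resonant w -> (0 < T)%N -> (T < period w j.+1)%N ->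
  distZv (scaleT (period w j) w) <= distZv (scaleT T w).
Proof.
move=> hn hw hT hlt; have [hp _] := period_props j hn hw.
have [h1 h2 h3] := np_spec hn hw hp.
rewrite leNgt; apply/negP => hc.
by have := h3 T hT hc; rewrite leqNgt hlt.
Qed.

Lemma period_lt (R : realType) n (w : 'I_n -> R) j :
  (0 < n)%N -> non_resonant w -> (period w j < period w j.+1)%N.
Proof.
move=> hn hw; have [hp hI] := period_props j hn hw.
have [h1 h2 h3] := np_spec hn hw hp.
rewrite ltnNge; apply/negP => hc.
by have := hI _ h1 hc; rewrite leNgt h2.
Qed.

Lemma period_ge (R : realType) n (w : 'I_n -> R) j :
  (0 < n)%N -> non_resonant w -> (j < period w j)%N.
Proof.
move=> hn hw; elim: j => [|j IH] //.
exact: leq_ltn_trans IH (period_lt j hn hw).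
Qed.

Lemma eps_dir (R : realType) n (w : 'I_n -> R) j :
  (0 < n)%N -> non_resonant w ->
  distZv (scaleT (period w j) w) ^+ n * (period w j.+1)%:R <= 2 ^+ n.
Proof.
move=> hn hw; have [hp _] := period_props j hn hw.
set e := distZv _.
have he : 0 < e := eps_pos hn hw hp.
have he1 : e <= 1 := dv_le1 _.
rewrite leNgt; apply/negP => hc.
set Q := (Num.trunc e^-1).+1.
have [T [hT hTQ hd]] := dirichlet w (ltn0Sn (Num.trunc e^-1)).
have hTe : distZv (scaleT T w) < e by apply: lt_trans hd (trunc_inv_gt he).
have hPT : (period w j.+1 <= T)%N.
  rewrite leqNgt; apply/negP => hlt.
  by have := period_min hn hw hT hlt; rewrite leNgt hTe.
have hQ : (Q%:R : R) <= 2 * e^-1.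
  rewrite /Q -natr1.
  have := truncn_le e^-1; rewrite invr_ge0 (ltW he) => h.
  have : 1 <= e^-1 by rewrite invf_ge1.
  lra.
have hP : ((period w j.+1)%:R : R) <= (2 * e^-1) ^+ n.
  apply: le_trans (_ : (Q%:R ^+ n : R) <= _).
    by rewrite -natrX ler_nat (leq_trans hPT hTQ).
  apply: lerXn2r => //; rewrite ?nnegrE ?ler0n //.
  by rewrite mulr_ge0 // invr_ge0 ltW.
have : e ^+ n * (period w j.+1)%:R <= e ^+ n * (2 * e^-1) ^+ n.
  by apply: ler_wpM2l => //; rewrite exprn_ge0 // ltW.
rewrite -exprMn mulrCA mulfV ?gt_eqF // mulr1 => h.
by move: hc; rewrite ltNge h.
Qed.



Lemma normk (R : realType) n (k : 'I_n -> int) i :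
  `|(k i)%:~R : R| <= (supnormZ k)%:R.
Proof.
have -> : `|(k i)%:~R : R| = (`|k i|%N)%:R by rewrite -intr_norm -abszE.
by rewrite ler_nat supZ_ge.
Qed.

Lemma dot_bound (R : realType) n (k : 'I_n -> int) (v : 'I_n -> R) :
  `|dotZR k v| <= n%:R * (supnormZ k)%:R * supnormR v.
Proof.
rewrite /dotZR; apply: le_trans (ler_norm_sum _ _ _) _.
apply: le_trans (_ : \sum_(i < n) (supnormZ k)%:R * supnormR v <= _).
  apply: ler_sum => i _; rewrite normrM; apply: ler_pM => //.
    exact: normk.
  exact: supR_ge.
rewrite sumr_const card_ord -mulr_natl le_eqVlt; apply/orP; left; apply/eqP; ring.
Qed.

Lemma dot_ident (R : realType) n (k : 'I_n -> int) (w : 'I_n -> R) (T : nat) (m : int)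
  (p : 'I_n -> int) :
  T%:R * (dotZR k w - m%:~R) =
  (\sum_(i < n) k i * p i - T%:Z * m)%:~R + dotZR k (fun i => scaleT T w i - (p i)%:~R).
Proof.
rewrite /dotZR /scaleT intrB intrM raddf_sum /=.
have -> : \sum_(i < n) (k i)%:~R * (T%:R * w i - (p i)%:~R) =
  T%:R * \sum_(i < n) (k i)%:~R * w i - \sum_(i < n) ((k i)%:~R * (p i)%:~R : R).
  by rewrite mulr_sumr -sumrB; apply: eq_bigr => i _; ring.
have -> : \sum_(i < n) ((k i * p i)%:~R : R) = \sum_(i < n) (k i)%:~R * (p i)%:~R.
  by apply: eq_bigr => i _; rewrite intrM.
have -> : ((T%:Z)%:~R : R) = T%:R by [].
ring.
Qed.

Lemma nondeg (R : realType) n (k : 'I_n -> int) (w : 'I_n -> R) (T : nat) (m : int) :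
  (0 < n)%N -> (0 < supnormZ k)%N ->
  n%:R * (supnormZ k)%:R * distZv (scaleT T w) < T%:R * `|dotZR k w - m%:~R| ->
  1 <= 2 * (T%:R * `|dotZR k w - m%:~R|).
Proof.
move=> hn hK h.
set a := T%:R * _ in h *.
set c : R := n%:R * (supnormZ k)%:R.
have hc : 0 < c by rewrite /c mulr_gt0 // ltr0n.
have h' : distZv (scaleT T w) < a / c.
  by rewrite ltr_pdivlMr // mulrC.
have [p hp] := dv_ex h'.
have hd := dot_bound k (fun i => scaleT T w i - (p i)%:~R).
rewrite -/c in hd.
have hcs : c * supnormR (fun i => scaleT T w i - (p i)%:~R) < a.
  by rewrite mulrC -ltr_pdivlMr.
have ha : `|T%:R * (dotZR k w - m%:~R)| = a by rewrite normrM normr_nat.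
rewrite (dot_ident k w T m p) in ha.
set z := (\sum_(i < n) k i * p i - T%:Z * m) in ha.
set d := dotZR k _ in ha hd.
have [z0|zn0] := eqVneq z 0.
  rewrite z0 add0r in ha; lra.
have hz : 1 <= `|(z%:~R : R)| by apply: norm_intr_ge1; rewrite ?intr_int // intr_eq0.
have := lerB_normD (z%:~R : R) d; lra.
Qed.



Lemma log_alg (R : realType) (N u La Lb Ld Le LK LC L2 LN : R) :
  0 < N -> 0 < u ->
  La + Ld <= LN + LK + Le ->
  N * Le + Lb <= N * L2 ->
  Lb <= LC + u * La ->
  0 <= L2 + Lb + Ld ->
  0 <= (N - (N - 1) * u) * Ld + N * u * LK + N * u * (L2 + LN) + N * LC + (N + u) * L2.
Proof.
move=> hN hu h1 h2 h3 h4.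
have i1 : N * La + N * Ld + Lb <= N * LN + N * LK + N * L2 by nra.
have i2 : u * (N * La + N * Ld + Lb) <= u * (N * LN + N * LK + N * L2).
  by apply: ler_wpM2l => //; exact: ltW.
have i3 : N * Lb <= N * LC + N * (u * La) by nra.
have i4 : (N + u) * (- L2 - Ld) <= (N + u) * Lb.
  apply: ler_wpM2l; [lra | lra].
nra.
Qed.

Lemma main_bound (R : realType) n (w : 'I_n -> R) (tau C : R) (k : 'I_n -> int) (m : int) :
  (0 < n)%N -> non_resonant w -> 0 <= tau -> 0 < n%:R - (n%:R - 1) * (1 + tau) -> 0 < C ->
  (forall i : nat, (period w i.+1)%:R <= C * (period w i)%:R `^ (1 + tau)) ->
  nonzeroZ k ->
  - ln 2 <= ln `|dotZR k w - m%:~R| \/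
  0 <= (n%:R - (n%:R - 1) * (1 + tau)) * ln `|dotZR k w - m%:~R|
       + n%:R * (1 + tau) * ln (supnormZ k)%:R
       + n%:R * (1 + tau) * (ln 2 + ln n%:R) + n%:R * ln C + (n%:R + (1 + tau)) * ln 2.
Proof.
move=> hn hw ht hden hC hg hk.
set N : R := n%:R in hden *. set u := 1 + tau in hden hg *.
have hK : (0 < supnormZ k)%N.
  case: hk => i hi; apply: leq_trans (supZ_ge k i); by rewrite absz_gt0.
set Kn := supnormZ k in hK *.
set x := dotZR k w.
set d : R := `|x - m%:~R|.
have hd : 0 < d.
  rewrite normr_gt0 subr_eq0; apply/negP => /eqP he; apply: (hw k hk); by exists m.
have hN : (0 : R) < N by rewrite ltr0n.
have hKr : (0 : R) < Kn%:R by rewrite ltr0n.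
pose P j := n%:R * Kn%:R * distZv (scaleT (period w j) w) < (period w j)%:R * d.
have exP : exists j, P j.
  exists (Num.trunc (n%:R * Kn%:R / d)); rewrite /P.
  set j := Num.trunc _.
  have h1 := truncnS_gt (n%:R * Kn%:R / d); rewrite -/j in h1.
  have h2 : (j.+1%:R : R) <= (period w j)%:R by rewrite ler_nat; exact: period_ge.
  have he1 := dv_le1 (scaleT (period w j) w).
  have he0 : 0 <= distZv (scaleT (period w j) w).
    apply: ltW; apply: eps_pos => //; exact: (period_props j hn hw).1.
  have hnk : 0 < n%:R * Kn%:R :> R by rewrite mulr_gt0.
  have h3 : n%:R * Kn%:R < (period w j)%:R * d.
    rewrite -ltr_pdivrMr //; lra.
  apply: le_lt_trans h3; rewrite -[X in _ <= X]mulr1; apply: ler_wpM2l => //; exact: ltW.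
case: (ex_minnP exP) => j hPj hmin.
have hj := nondeg hn hK hPj.
have hL2 : 0 < ln (2 : R) by apply: ln_gt0; lra.
have hLK : 0 <= ln (Kn%:R : R) by apply: ln_ge0; rewrite ler1n.
have hu : 0 < u by rewrite /u; lra.
case: j hPj hmin hj => [|j] hPj hmin hj.
  rewrite /= mul1r -/x -/d in hj.
  have hld : - ln 2 <= ln d.
    rewrite -lnV ?posrE //; rewrite ler_ln ?posrE ?invr_gt0 //; lra.
  by left.
right.
rewrite -/x -/d in hj.
have hnP : ~~ P j by apply/negP => /hmin; rewrite ltnn.
rewrite /P -leNgt in hnP.
have [hpa _] := period_props j hn hw.
have [hpb _] := period_props j.+1 hn hw.
set a := period w j in hnP hpa hpb hj *.
set b := period w j.+1 in hpb hj *.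
set e := distZv (scaleT a w) in hnP.
have he : 0 < e by apply: eps_pos.
have hdir : e ^+ n * b%:R <= 2 ^+ n := eps_dir j hn hw.
have hgj : b%:R <= C * a%:R `^ u := hg j.
have ha : (0:R) < a%:R by rewrite ltr0n.
have hb : (0:R) < b%:R by rewrite ltr0n.
have lnle : forall x y : R, 0 < x -> 0 < y -> x <= y -> ln x <= ln y.
  by move=> x0 y0 hx hy hxy; rewrite ler_ln ?posrE.
have l1 : ln a%:R + ln d <= ln N + ln Kn%:R + ln e.
  have := lnle _ _ (mulr_gt0 ha hd) (mulr_gt0 (mulr_gt0 hN hKr) he) hnP.
  by rewrite !lnM ?posrE ?mulr_gt0.
have l2 : N * ln e + ln b%:R <= N * ln 2.
  have := lnle _ _ (mulr_gt0 (exprn_gt0 n he) hb) (exprn_gt0 n (ltr0n R 2)) hdir.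
  by rewrite !lnM ?posrE ?exprn_gt0 // !lnXn // /N !mulr_natl.
have l3 : ln b%:R <= ln C + u * ln a%:R.
  have := lnle _ _ hb (mulr_gt0 hC (powR_gt0 u ha)) hgj.
  by rewrite lnM ?posrE ?powR_gt0 // ln_powR.
have l4 : 0 <= ln 2 + ln b%:R + ln d.
  have h2bd : 0 < 2 * (b%:R * d) by rewrite !mulr_gt0.
  have := lnle _ _ ltr01 h2bd hj.
  by rewrite ln1 !lnM ?posrE ?mulr_gt0 // addrA.
exact: (log_alg hN hu l1 l2 l3 l4).
Qed.



Unset Implicit Arguments.
Local Close Scope classical_set_scope.

Theorem proposition3p10 (R : realType) (n : nat) (w : 'I_n -> R)
  (tau C : R) :
  (1 <= n)%N ->
  non_resonant w ->
  0 <= tau ->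
  ((1 < n)%N -> tau < 1 / (n.-1)%:R) ->
  0 < C ->
  (forall i : nat, (period w i.+1)%:R <= C * (period w i)%:R `^ (1 + tau)) ->
  let mu := (n%:R * tau) / (n%:R - (n.-1)%:R * (1 + tau)) in
  exists D : R, 0 < D /\
    forall k : 'I_n -> int, nonzeroZ k ->
      distZ (dotZR k w) >= D * (supnormZ k)%:R `^ (- ((1 + mu) * n%:R)).
Proof.
move=> hn hw ht htau hC hg mu.
have e1 : ((n.-1)%:R : R) = n%:R - 1 by rewrite -subn1 natrB.
have hN : (1 : R) <= n%:R by rewrite ler1n.
have hden : 0 < n%:R - (n%:R - 1) * (1 + tau) :> R.
  case: (ltngtP 1 n) => hn1; last first.
  - by rewrite -hn1 subrr mul0r subr0.
  - by move: hn; rewrite leqNgt hn1.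
  have := htau hn1; rewrite e1 => h.
  have hN1 : (0 : R) < n%:R - 1 by rewrite subr_gt0 ltr1n.
  have h' : (n%:R - 1) * tau < 1.
    by move: h; rewrite ltr_pdivlMr // mulrC.
  lra.
set N : R := n%:R in hN hden e1 *.
set u := 1 + tau in hden hg mu *.
set den := N - (N - 1) * u in hden *.
set E := N * u / den.
set cst := (N * u * (ln 2 + ln N) + N * ln C + (N + u) * ln 2) / den.
exists (expR (- (`|cst| + ln 2))); split; first exact: expR_gt0.
move=> k hk.
have hmu : (1 + mu) * N = E.
  rewrite /mu /E e1 -/den; move: hden; rewrite /den /u /N => hden; field; rewrite gt_eqF //.
rewrite hmu /distZ; apply: lb_le_inf.
  by exists `|dotZR k w - (0:int)%:~R|; exists 0.
move=> y [m _ <-].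
have hK : (0 < supnormZ k)%N.
  case: hk => i hi; apply: leq_trans (supZ_ge k i); by rewrite absz_gt0.
have hKr : (0 : R) < (supnormZ k)%:R by rewrite ltr0n.
have hd : 0 < `|dotZR k w - m%:~R|.
  rewrite normr_gt0 subr_eq0; apply/negP => /eqP he; apply: (hw k hk); by exists m.
rewrite -ler_ln ?posrE ?mulr_gt0 ?expR_gt0 ?powR_gt0 //.
rewrite lnM ?posrE ?expR_gt0 ?powR_gt0 // expRK ln_powR.
have hL2 : 0 < ln (2 : R) by apply: ln_gt0; lra.
have hLK : 0 <= ln ((supnormZ k)%:R : R) by apply: ln_ge0; rewrite ler1n.
have hu : 0 <= u by rewrite /u; lra.
have hE : 0 <= E by apply: divr_ge0; [apply: mulr_ge0 => //; lra | exact: ltW].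
have hc := ler_norm cst.
have hc0 := normr_ge0 cst.
have hELK : 0 <= E * ln ((supnormZ k)%:R : R) by apply: mulr_ge0.
have [h|h] := main_bound (k:=k) m hn hw ht hden hC hg hk.
  rewrite -/N -/u -/den in h; lra.
rewrite -/N -/u -/den in h.
have hq : ln `|dotZR k w - m%:~R| + E * ln (supnormZ k)%:R + cst =
  (den * ln `|dotZR k w - m%:~R| + N * u * ln (supnormZ k)%:R
   + N * u * (ln 2 + ln N) + N * ln C + (N + u) * ln 2) / den.
  rewrite /E /cst; field; rewrite gt_eqF //.
have : 0 <= ln `|dotZR k w - m%:~R| + E * ln (supnormZ k)%:R + cst.
  by rewrite hq divr_ge0 // ltW.
lra.
Qed.
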